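(* Let $k$ be a function assigning to each prime power $q$ a positive integer $k(q)$, and suppose $k(q)=o(q)$, i.e. $k(q)/q\to 0$ as $q\to\infty$ over prime powers. Then for every sufficiently large prime power $q$, writing $k=k(q)$, there exists a finite connected graph $G$ of order $2q^{2}+(1-k)q$ in which every vertex has degree either $q+1-k$ or $q$, and whose cop number satisfies $q+1-k\le c(G)\le q$.
   Context: Graphs are finite, simple and connected, and are considered reflexive: each vertex carries a loop, so that a player may stay on its vertex. The game of Cops and Robbers on a graph $G$ is played as follows. First, a set of $m$ cops each choose a vertex (several cops may choose the same vertex). Then the robber chooses a vertex. After that, the players alternate turns, the cops moving first. On the cops' turn, each cop either stays on its vertex or moves to an adjacent vertex. On the robber's turn, the robber either stays or moves to an adjacent vertex. Both sides have full information at all times. The cops win if, after finitely many rounds, some cop occupies the same vertex as the robber. The cop number $c(G)$ is the least $m$ such that $m$ cops have a strategy that wins against every robber strategy. The order of a graph is its number of vertices. *)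

(* Defs.v *)
From HB Require Import structures.
From mathcomp Require Import all_boot all_order all_algebra.
Set Implicit Arguments. Unset Strict Implicit. Unset Printing Implicit Defensive.
Import Order.TTheory GRing.Theory Num.Theory.

Definition prime_power (q : nat) : Prop :=
  exists p n : nat, prime p /\ (0 < n)%N /\ q = (p ^ n)%N.

Definition simple_graph (T : finType) (e : rel T) : Prop :=
  symmetric e /\ irreflexive e.

Definition connected_graph (T : finType) (e : rel T) : Prop :=
  forall x y : T, connect e x y.

(* degree (the loops of the reflexive convention are not counted) *)
Definition degree (T : finType) (e : rel T) (x : T) : nat := #|[set y | e x y]|.

Definition step (T : finType) (e : rel T) (x y : T) : Prop := x = y \/ e x y.

(* cop_win e m c r : it is the cops' turn, the m cops stand at c, the robber
   at r, and the cops can force a capture in finitely many rounds. *)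
Inductive cop_win (T : finType) (e : rel T) (m : nat) :
    ('I_m -> T) -> T -> Prop :=
  | cw_caught (c : 'I_m -> T) (r : T) :
      (exists i, c i = r) -> cop_win e c r
  | cw_move (c : 'I_m -> T) (r : T) (c' : 'I_m -> T) :
      (forall i, step e (c i) (c' i)) ->
      ((exists i, c' i = r) \/
       (forall r', step e r r' -> cop_win e c' r')) ->
      cop_win e c r.

(* m cops have a winning strategy: they choose their vertices, then the
   robber chooses his, then the cops move first. *)
Definition cops_win (T : finType) (e : rel T) (m : nat) : Prop :=
  exists c : 'I_m -> T, forall r : T, cop_win e c r.

Definition is_cop_number (T : finType) (e : rel T) (n : nat) : Prop :=
  cops_win e n /\ forall m, (m < n)%N -> ~ cops_win e m.

(* Main.v *)
Require Import Defs.
From HB Require Import structures.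
From mathcomp Require Import all_boot all_order all_algebra.
From mathcomp Require Import ring finfield zify.
From Stdlib Require Import Classical.
Import Order.TTheory GRing.Theory Num.Theory.
Set Implicit Arguments. Unset Strict Implicit.

Section Generic.
Variables (T : finType) (e : rel T).
Hypothesis esym : symmetric e.
Hypothesis tri : forall a b c, e a b -> e b c -> e a c -> False.
Hypothesis c4 : forall u w a b, u != w -> a != b -> e u a -> e a w -> e u b -> e b w -> False.

Lemma card_bigcup_seq (I : eqType) (s : seq I) (A : I -> {set T}) :
  #|\bigcup_(i <- s) A i| <= \sum_(i <- s) #|A i|.
Proof.
elim: s => [|i s IH]; first by rewrite !big_nil cards0.
rewrite !big_cons; apply: leq_trans (leq_of_leqif (leq_card_setU _ _)) _.
exact: leq_add.
Qed.

Lemma card_bigcup_ord m (A : 'I_m -> {set T}) b :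
  (forall i, #|A i| <= b) -> #|\bigcup_(i < m) A i| <= m * b.
Proof.
move=> Hb; apply: leq_trans (card_bigcup_seq (index_enum _) A) _.
have -> : m * b = \sum_(i < m) b by rewrite sum_nat_const card_ord.
by apply: leq_sum => i _; apply: Hb.
Qed.

Definition good m (c : 'I_m -> T) r := forall i, c i != r /\ ~~ e (c i) r.

Lemma next_good m d (c c' : 'I_m -> T) r :
  (forall x, d <= degree e x) -> m < d -> good c r ->
  (forall i, step e (c i) (c' i)) -> exists x, e r x /\ good c' x.
Proof.
move=> degd md g stp.
pose S i := [set x | e r x && ((c' i == x) || e (c' i) x)].
have S1 i : #|S i| <= 1.
  apply/card_le1_eqP => x1 x2; rewrite !inE => /andP[rx1 h1] /andP[rx2 h2].
  have cr : c' i != r.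
    apply/eqP=> E; have [g1 g2] := g i; case: (stp i) => H.
      by rewrite H E eqxx in g1.
    by rewrite -E H in g2.
  apply/eqP; apply/negPn/negP => nx.
  case/orP: h1 => [/eqP E1|h1]; case/orP: h2 => [/eqP E2|h2].
  - by rewrite -E1 -E2 eqxx in nx.
  - by apply: (tri rx1 _ rx2); rewrite -E1.
  - by apply: (tri rx2 _ rx1); rewrite -E2.
  - by apply: (c4 cr nx h2 _ h1) => //; rewrite esym.
have cardB : #|\bigcup_(i < m) S i| <= m.
  by apply: leq_trans (card_bigcup_ord (b:=1) _) _; rewrite ?muln1.
have : ~~ ([set x | e r x] \subset \bigcup_(i < m) S i).
  apply/negP => /subset_leq_card H.
  have := leq_trans (degd r) (leq_trans H cardB).
  by rewrite leqNgt md.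
case/subsetPn => x; rewrite inE => rx xB.
exists x; split => // i; apply/andP; rewrite -negb_or; apply/negP => h.
by apply: (negP xB); apply/bigcupP; exists i => //; rewrite inE rx.
Qed.

Lemma escape m d : (forall x, d <= degree e x) -> m < d ->
  forall (c : 'I_m -> T) r, cop_win e c r -> good c r -> False.
Proof.
move=> degd md; fix IH 3 => c r w g.
case: w g => {c r} [c r [i ci] | c r c' stp H] g.
  by have [/eqP + _] := g i.
case: H => [[i ci] | H].
  have [g1 g2] := g i; case: (stp i) => E.
    by rewrite E ci eqxx in g1.
  by rewrite ci in E; rewrite E in g2.
have [x [rx gx]] := next_good degd md g stp.
exact: (IH _ _ (H x (or_intror rx)) gx).
Qed.

Lemma not_cops_win m d D :
  (forall x, d <= degree e x) -> (forall x, degree e x <= D) -> m < d ->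
  m * D.+1 < #|T| -> ~ cops_win e m.
Proof.
move=> degd degD md mT [c Hc].
pose U := \bigcup_(i < m) (c i |: [set y | e (c i) y]).
have cU : #|U| <= m * D.+1.
  apply: card_bigcup_ord => i; rewrite cardsU1 -add1n; apply: leq_add; first by case: (_ \notin _).
  exact: degD.
case: (pickP (fun r => r \notin U)) => [r rU | H].
  apply: (escape degd md (Hc r)) => i; apply/andP; rewrite -negb_or.
  apply: contra rU => h; apply/bigcupP; exists i => //.
  by rewrite !inE; case/orP: h => [/eqP->|->]; rewrite ?eqxx ?orbT.
have : #|T| <= #|U|.
  rewrite -cardsT; apply: subset_leq_card; apply/subsetP => x _.
  by have := H x; rewrite /= => /negbFE.
by rewrite leqNgt (leq_ltn_trans cU mT).
Qed.

End Generic.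


Section Biaffine.
Local Open Scope ring_scope.
Variables (F : finFieldType) (s : nat).
Hypothesis Hs1 : (1 < s)%N.
Hypothesis Hsq : (s <= #|F|)%N.

Definition sig_ (i : 'I_s) : F := enum_val (widen_ord Hsq i).
Lemma sig_inj : injective sig_.
Proof. by move=> i j /enum_val_inj /(congr1 val) /= /val_inj. Qed.

Definition V := (F * F + 'I_s * F)%type.
Definition adjP (p : F * F) (l : 'I_s * F) : bool := p.2 == sig_ l.1 * p.1 + l.2.
Definition ge : rel V := fun u v =>
  match u, v with
  | inl p, inr l => adjP p l
  | inr l, inl p => adjP p l
  | _, _ => false
  end.

Lemma ge_sym : symmetric ge.
Proof. by case=> [p|l] [p'|l']. Qed.

Lemma ge_irr : irreflexive ge.
Proof. by case. Qed.

Lemma ge_tri a b c : ge a b -> ge b c -> ge a c -> False.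
Proof. by case: a => ?; case: b => ?; case: c. Qed.

Lemma alg (a a' b b' x1 x2 y1 y2 : F) :
  y1 = a * x1 + b -> y1 = a' * x1 + b' -> y2 = a * x2 + b -> y2 = a' * x2 + b' ->
  (a = a' /\ b = b') \/ (x1 = x2 /\ y1 = y2).
Proof.
move=> h1 h2 h3 h4.
have : (a - a') * (x1 - x2) == 0.
  apply/eqP; have : (a * x1 + b) - (a * x2 + b) = (a' * x1 + b') - (a' * x2 + b').
    by rewrite -h1 -h2 -h3 -h4.
  move=> H.
  have -> : (a - a') * (x1 - x2) = ((a*x1+b) - (a*x2+b)) - ((a'*x1+b') - (a'*x2+b')) by ring.
  by rewrite H subrr.
rewrite mulf_eq0 !subr_eq0 => /orP[/eqP E|/eqP E].
  left; split => //; subst a'; apply: (addrI (a * x1)); by rewrite -h1 -h2.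
by right; split => //; rewrite h1 h3 E.
Qed.

Lemma ge_c4 u w a b : u != w -> a != b -> ge u a -> ge a w -> ge u b -> ge b w -> False.
Proof.
case: u => [[x1 y1]|[i1 b1]]; case: w => [[x2 y2]|[i2 b2]];
  case: a => [[x3 y3]|[i3 b3]] //; case: b => [[x4 y4]|[i4 b4]] //=;
  rewrite /adjP /= => nuw nab /eqP h1 /eqP h2 /eqP h3 /eqP h4.
- case: (alg h1 h3 h2 h4) => [[/sig_inj E1 E2]|[E1 E2]].
    by move: nab; rewrite E1 E2 eqxx.
  by move: nuw; rewrite E1 E2 eqxx.
- case: (alg h1 h2 h3 h4) => [[/sig_inj E1 E2]|[E1 E2]].
    by move: nuw; rewrite E1 E2 eqxx.
  by move: nab; rewrite E1 E2 eqxx.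
Qed.


Lemma deg_pt x y : degree ge (inl (x, y)) = s.
Proof.
rewrite /degree; have -> : [set v | ge (inl (x, y)) v] =
   (fun i => inr (i, y - sig_ i * x) : V) @: [set: 'I_s].
  apply/setP => v; rewrite inE; case: v => [p'|[i b]] /=.
    by apply/esym/imsetP => -[j _].
  rewrite /adjP /=; apply/eqP/imsetP => [-> | [j _ [E1 E2]]].
    by exists i; rewrite ?inE // addrAC subrr add0r.
  by rewrite E2 E1 addrC subrK.
rewrite card_imset ?cardsT ?card_ord //.
by move=> i j [].
Qed.

Lemma deg_ln i b : degree ge (inr (i, b)) = #|F|.
Proof.
rewrite /degree; have -> : [set v | ge (inr (i, b)) v] =
   (fun x => inl (x, sig_ i * x + b) : V) @: [set: F].
  apply/setP => v; rewrite inE; case: v => [[x y]|l] /=.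
    rewrite /adjP /=; apply/eqP/imsetP => [-> | [j _ [E1 E2]]].
      by exists x.
    by rewrite E2 E1.
  by apply/esym/imsetP => -[j _].
rewrite card_imset ?cardsT //.
by move=> x x' [].
Qed.

Lemma card_V : #|{: V}| = (#|F| * #|F| + s * #|F|)%N.
Proof. by rewrite /V card_sum !card_prod card_ord. Qed.


Definition i0 : 'I_s := Ordinal (ltnW Hs1).
Definition i1 : 'I_s := Ordinal Hs1.

Lemma conn_col x y1 y2 : connect ge (inl (x, y1)) (inl (x, y2)).
Proof.
set d := sig_ i0 - sig_ i1.
have dn0 : d != 0.
  by rewrite subr_eq0; apply/eqP => /sig_inj.
set t := (y2 - y1) / d.
have Ht : y2 = t * d + y1 by rewrite divfK // subrK.
set c0 := y1 - sig_ i0 * x.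
set P := sig_ i0 * (x + t) + c0.
apply: (connect_trans (connect1 (_ : ge _ (inr (i0, c0))))).
  by rewrite /= /adjP /= /c0; apply/eqP; ring.
apply: (connect_trans (connect1 (_ : ge _ (inl (x + t, P))))).
  by rewrite /= /adjP /=.
apply: (connect_trans (connect1 (_ : ge _ (inr (i1, P - sig_ i1 * (x + t)))))).
  by rewrite /= /adjP /=; apply/eqP; ring.
apply: connect1; rewrite /= /adjP /=; apply/eqP.
by rewrite Ht /P /c0 /d; ring.
Qed.

Lemma conn0 v : connect ge (inl (0, 0)) v.
Proof.
case: v => [[x y]|[i b]].
  apply: (connect_trans (conn_col _ _ (y - sig_ i0 * x))).
  apply: (connect_trans (connect1 (_ : ge _ (inr (i0, y - sig_ i0 * x))))).
    by rewrite /= /adjP /= mulr0 add0r.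
  by apply: connect1; rewrite /= /adjP /=; apply/eqP; ring.
apply: (connect_trans (conn_col _ _ b)).
by apply: connect1; rewrite /= /adjP /= mulr0 add0r.
Qed.

Lemma ge_conn : connected_graph ge.
Proof.
move=> u v; apply: (connect_trans (y := inl (0, 0))); last exact: conn0.
by rewrite (sym_connect_sym ge_sym) conn0.
Qed.


Definition cop0 (j : 'I_#|F|) : V := inl (0, enum_val j).

Lemma adj_col i b : ge (inl (0, b)) (inr (i, b)).
Proof. by rewrite /= /adjP /= mulr0 add0r. Qed.

Lemma cops_win_F : cops_win ge #|F|.
Proof.
exists cop0 => r.
case: r => [[x y]|[i b]]; last first.
  pose j := enum_rank b.
  apply: (cw_move (c' := fun t => if t == j then inr (i, b) else cop0 t)).
    move=> t; case: eqP => [->|_]; last by left.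
    by right; rewrite /cop0 enum_rankK adj_col.
  by left; exists j; rewrite eqxx.
case: (eqVneq x 0) => [-> | xn0].
  by apply: cw_caught; exists (enum_rank y); rewrite /cop0 enum_rankK.
pose c' j : V := if [pick i | sig_ i == (y - enum_val j) / x] is Some i
                 then inr (i, enum_val j) else cop0 j.
have c'E j i : sig_ i = (y - enum_val j) / x -> c' j = inr (i, enum_val j).
  move=> Hi; rewrite /c'; case: pickP => [i' /eqP H|H].
    by rewrite (@sig_inj i' i) // H Hi.
  by move: (H i); rewrite Hi eqxx.
apply: (cw_move (c' := c')).
  move=> j; rewrite /c'; case: pickP => [i _|_]; last by left.
  by right; apply: adj_col.
right => r' [<- | er].
  pose j := enum_rank (y - sig_ i0 * x).
  have Hj : c' j = inr (i0, y - sig_ i0 * x).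
    rewrite (c'E j i0) ?enum_rankK //.
    have -> : y - (y - sig_ i0 * x) = sig_ i0 * x by ring.
    by rewrite mulfK.
  apply: (cw_move (c' := fun t => if t == j then inl (x, y) else c' t)).
    move=> t; case: eqP => [->|_]; last by left.
    by right; rewrite Hj /= /adjP /=; apply/eqP; ring.
  by left; exists j; rewrite eqxx.
case: r' er => [p|[i b]] //= /eqP er.
apply: cw_caught; exists (enum_rank b).
rewrite (c'E _ i) ?enum_rankK // [y]er.
have -> : sig_ i * x + b - b = sig_ i * x by ring.
by rewrite mulfK.
Qed.

End Biaffine.

Unset Implicit Arguments. Set Strict Implicit.

Lemma min_cop (T : finType) (e : rel T) n0 :
  cops_win e n0 -> exists n, is_cop_number e n /\ (n <= n0)%N.
Proof.
elim: n0 {-2}n0 (leqnn n0) => [|N IH] n0 Hn0 W.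
  exists n0; split => //; split => // m; by rewrite ltnNge (leq_trans Hn0).
case: (classic (exists m, (m < n0)%N /\ cops_win e m)) => [[m [mn Wm]]|H].
  have mN : (m <= N)%N by rewrite -ltnS (leq_trans mn).
  have [n [Hn nm]] := IH m mN Wm.
  by exists n; split => //; apply: leq_trans nm (ltnW mn).
exists n0; split => //; split => // m mn Wm; apply: H; by exists m.
Qed.

Theorem theorem12 (k : nat -> nat)
  (k_pos : forall q, prime_power q -> (0 < k q)%N)
  (k_little_o : forall eps : rat, (0 < eps)%R ->
     exists N : nat, forall q, prime_power q -> (N <= q)%N ->
       ((k q)%:R < eps * q%:R)%R) :
  exists N : nat, forall q : nat, prime_power q -> (N <= q)%N ->
    exists (T : finType) (e : rel T),
      [/\ simple_graph e, connected_graph e,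
          #|T| = (2 * q ^ 2 + q - k q * q)%N,
          (forall x : T, degree e x = (q + 1 - k q)%N \/ degree e x = q) &
          exists n : nat, is_cop_number e n /\ (q + 1 - k q <= n <= q)%N].
Proof.
have [N HN] := k_little_o 1%R ltr01.
exists N => q pq Nq.
have kq : (k q < q)%N by have := HN q pq Nq; rewrite mul1r ltr_nat.
have k0 := k_pos q pq.
case: pq => p [n [pp [n0 Eq]]].
have [F _ cF] := pPrimePowerField pp n0.
rewrite -Eq in cF.
set s := (q + 1 - k q)%N.
have Hs1 : (1 < s)%N by rewrite /s; lia.
have Hsq : (s <= #|F|)%N by rewrite /s cF; lia.
exists (V F s), (ge Hsq); split.
- split; [exact: ge_sym | exact: ge_irr].
- exact: ge_conn Hs1 Hsq.
- rewrite card_V cF /s; nia.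
- by case=> [[x y]|[i b]]; [left; rewrite deg_pt | right; rewrite deg_ln cF].
- have [m [Hm mq]] := @min_cop _ _ _ (cops_win_F Hs1 Hsq).
  exists m; split => //; rewrite -cF mq andbT.
  rewrite leqNgt; apply/negP => ms.
  have degd x : (s <= degree (ge Hsq) x)%N.
    by case: x => [[x y]|[i b]]; rewrite ?deg_pt ?deg_ln.
  have degD x : (degree (ge Hsq) x <= #|F|)%N.
    by case: x => [[x y]|[i b]]; rewrite ?deg_pt ?deg_ln.
  apply: (not_cops_win (@ge_sym _ _ Hsq) (@ge_tri _ _ Hsq) (@ge_c4 _ _ Hsq) degd degD ms _ Hm.1).
  rewrite card_V cF; have := Hsq; rewrite cF => Hsq'; nia.
Qed.
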